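(* Let $\mathcal{G}$, $u$, $v$ be as in the context (finite bicoloured graph with a pure green path from $u$ to $v$), and let $e$ be a red edge whose weight $\omega(e)$ is a random variable with probability density function $f_e:(0,\infty)\to[0,\phi_e]$ for some $\phi_e>0$, independent of all other edge weights. Then for every $r\ge0$ and $\varepsilon\ge0$, $$\mathbb{P}\big(r<\Delta_e(r)\le r+\varepsilon\big)\le\phi_e\cdot\varepsilon .$$
   Context: $\mathcal{G}=\langle V,E,\omega,\lambda\rangle$ is a finite weighted coloured--edge graph (directed multigraph, weights $\omega:E\to\mathbb{R}^+$, colours $\lambda:E\to M$) with $M=\{\text{red},\text{green}\}$. A path from $u$ to $v$ is a sequence of consecutive edges from $u$ to $v$ visiting no vertex twice; $\omega_{\text{red}}(p)$, $\omega_{\text{green}}(p)$ denote the sums of weights of the red, resp. green, edges of $p$. It is assumed there is a path from $u$ to $v$ all of whose edges are green. For a red edge $e$ and $r\ge0$, define: $g_r$ is the least value of $\omega_{\text{green}}(p)$ over all paths $p$ from $u$ to $v$ not containing $e$ with $\omega_{\text{red}}(p)\le r$ (such paths exist, e.g. the pure green path, provided it avoids $e$, which it does since $e$ is red). Then $\Delta_e(r)$ is the least value of $\omega_{\text{red}}(q)$ over all paths $q$ from $u$ to $v$ that contain $e$ and satisfy $\omega_{\text{green}}(q)<g_r$; if there is no such path, $\Delta_e(r)=\infty$. (Thus $\Delta_e(r)$ is a random variable when edge weights are random.) *)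

(* Defs.v *)
From HB Require Import structures.
From mathcomp Require Import all_boot all_order all_algebra.
From mathcomp Require Import all_classical all_reals all_analysis.
Set Implicit Arguments. Unset Strict Implicit. Unset Printing Implicit Defensive.
Import Order.TTheory GRing.Theory Num.Theory.
Local Open Scope classical_set_scope.
Local Open Scope ring_scope.

Inductive colour := Red | Green.
Definition is_red (c : colour) : bool := if c is Red then true else false.
Definition is_green (c : colour) : bool := if c is Green then true else false.

Section Graph.
Variables (V E : finType) (src tgt : E -> V).

Fixpoint consecutive (a : V) (p : seq E) : bool :=
  if p is e :: p' then (src e == a) && consecutive (tgt e) p' else true.

Definition is_path (a b : V) (p : seq E) : Prop :=
  [/\ consecutive a p, last a (map tgt p) = b & uniq (a :: map tgt p)].

Variable R : realType.
Variable col : E -> colour.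

Definition w_red (w : E -> R) (p : seq E) : R :=
  \sum_(e <- p | is_red (col e)) w e.
Definition w_green (w : E -> R) (p : seq E) : R :=
  \sum_(e <- p | is_green (col e)) w e.

Definition g_r (u v : V) (e : E) (w : E -> R) (r : R) : \bar R :=
  ereal_inf [set (w_green w p)%:E | p in
               [set p | is_path u v p /\ e \notin p /\ w_red w p <= r]].

(* Delta_e(r) : least red weight over u-v paths through e whose green weight
   is < g_r;  +oo if there is no such path. *)
Definition Delta (u v : V) (e : E) (w : E -> R) (r : R) : \bar R :=
  ereal_inf [set (w_red w q)%:E | q in
               [set q | is_path u v q /\ e \in q /\
                        ((w_green w q)%:E < g_r u v e w r)%E]].
End Graph.

(* Main.v *)
Require Import Defs.
From HB Require Import structures.
From mathcomp Require Import all_boot all_order all_algebra.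
From mathcomp Require Import all_classical all_reals all_analysis.
From mathcomp Require Import measurable_realfun ring lra.
Import Order.TTheory GRing.Theory Num.Theory.
Local Open Scope classical_set_scope.
Local Open Scope ring_scope.

Section GraphFacts.
Variables (R : realType) (V E : finType) (src tgt : E -> V) (col : E -> colour) (u v : V) (e : E).
Hypothesis e_red : col e = Red.

Definition w0 (w : E -> R) : E -> R := fun e' => if e' == e then 0 else w e'.

Lemma path_uniq a b p : is_path src tgt a b p -> uniq p.
Proof. by case=> _ _ /andP[_ /map_uniq]. Qed.

Lemma w_red_w0 w p : e \notin p -> w_red col w p = w_red col (w0 w) p.
Proof.
move=> ep; rewrite /w_red big_mkcond [RHS]big_mkcond; apply: eq_big_seq => x xp /=.
by rewrite /w0; case: eqP => // xe; move: ep; rewrite -xe xp.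
Qed.

Lemma w_green_w0 w p : w_green col w p = w_green col (w0 w) p.
Proof.
rewrite /w_green; apply: eq_bigr => x xg; rewrite /w0; case: eqP => // xe.
by move: xg; rewrite xe e_red.
Qed.

Lemma g_r_w0 w r : g_r src tgt col u v e w r = g_r src tgt col u v e (w0 w) r.
Proof.
rewrite /g_r; congr ereal_inf; apply/seteqP; split=> _ [p [pp [ep pr]] <-].
  by exists p; [split; [|split; [|rewrite -w_red_w0]]|rewrite -w_green_w0].
by exists p; [split; [|split; [|rewrite w_red_w0]]|rewrite -w_green_w0].
Qed.

Lemma w_red_split w q : uniq q -> e \in q -> w_red col w q = w e + w_red col (w0 w) q.
Proof.
move=> uq eq; rewrite /w_red big_mkcond [X in _ = _ + X]big_mkcond /= (bigD1_seq e) //=.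
rewrite [X in _ = _ + X](bigD1_seq e) //= e_red /= /w0 eqxx add0r; congr (_ + _).
by apply: eq_bigr => x /negPf ->.
Qed.

Lemma Delta_split w r :
  Delta src tgt col u v e w r = ((w e)%:E + Delta src tgt col u v e (w0 w) r)%E.
Proof.
rewrite /Delta -g_r_w0.
set Q := [set q | is_path src tgt u v q /\ e \in q /\
                  ((w_green col w q)%:E < g_r src tgt col u v e w r)%E].
have -> : [set q | is_path src tgt u v q /\ e \in q /\
      ((w_green col (w0 w) q)%:E < g_r src tgt col u v e w r)%E] = Q.
  by apply/seteqP; split=> q /=; rewrite -w_green_w0.
have sp : forall q, Q q -> w_red col w q = w e + w_red col (w0 w) q.
  by move=> q [qp [eq _]]; apply: w_red_split => //; exact: path_uniq qp.
apply/eqP; rewrite eq_le; apply/andP; split.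
- rewrite -leeBlDl //; apply/ereal_infP => _ [q Qq <-].
  rewrite leeBlDl // -EFinD -sp //.
  by apply: ereal_inf_lbound; exists q.
- apply/ereal_infP => _ [q Qq <-]; rewrite sp // EFinD leeD2l //.
  by apply: ereal_inf_lbound; exists q.
Qed.
End GraphFacts.


Lemma bigcap_count_meas d (T : measurableType d) (U : countType) (F : U -> set T) :
  (forall i, measurable (F i)) -> measurable (\bigcap_i F i).
Proof.
move=> mF; rewrite -(setCK (\bigcap_i F i)) setC_bigcap; apply: measurableC.
by apply: countable_bigcupT_measurable; [exact: countableP|move=> i; exact: measurableC].
Qed.

Lemma lt_inf_char (R : realType) (U : Type) (S : set U) (F : U -> R) (a : R) :
  ((a%:E < ereal_inf [set (F p)%:E | p in S])%E <->
   exists n : nat, forall p, S p -> a + n.+1%:R^-1 <= F p).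
Proof.
split.
- set g := ereal_inf _; move=> ag.
  have lb : forall p, S p -> (g <= (F p)%:E)%E by move=> p Sp; apply: ereal_inf_lbound; exists p.
  move: ag lb; case: g => [y| |] //.
  + rewrite lte_fin => /ltr_add_invr [k Hk] lb; exists k => p Sp.
    by apply: (le_trans (ltW Hk)); rewrite -lee_fin; exact: lb.
  + by move=> _ lb; exists 0%N => p /lb.
- move=> [n Hn]; apply: (@lt_le_trans _ _ (a + n.+1%:R^-1)%:E).
    by rewrite lte_fin ltrDl invr_gt0 ltr0n.
  by apply/ereal_infP => _ [p Sp <-]; rewrite lee_fin; exact: Hn.
Qed.

Lemma le_char (R : realType) (x : \bar R) (t : R) :
  (x <= t%:E)%E <-> forall n : nat, (x < (t + n.+1%:R^-1)%:E)%E.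
Proof.
split.
- move=> xt n; apply: (le_lt_trans xt); by rewrite lte_fin ltrDl invr_gt0 ltr0n.
- case: x => [y| |] H //.
  + rewrite lee_fin leNgt; apply/negP => /ltr_add_invr [k Hk].
    by move: (H k); rewrite lte_fin => /(lt_trans Hk); rewrite ltxx.
  + by move: (H 0%N).
  + by rewrite leNye.
Qed.

Section Meas.
Variables (R : realType) (V E : finType) (src tgt : E -> V) (col : E -> colour) (u v : V) (e : E).
Variables (d : measure_display) (T : measurableType d) (w : T -> E -> R).
Hypothesis wm : forall e', measurable_fun setT (fun x => w x e').

Lemma msum (P : pred E) p : measurable_fun setT (fun x => \sum_(e' <- p | P e') w x e').
Proof.
elim: p => [|a p IH].
  under eq_fun do rewrite big_nil; exact: measurable_cst.
under eq_fun do rewrite big_cons; case: (P a) => //.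
exact: (measurable_funD (wm a) IH).
Qed.

Lemma mset_lt (f g : T -> R) : measurable_fun setT f -> measurable_fun setT g ->
  measurable [set x | f x < g x].
Proof.
move=> mf mg; have mt : measurable ([set true] : set bool) by [].
have := measurable_fun_ltr mf mg measurableT mt.
by rewrite setTI.
Qed.

Lemma mset_le (f g : T -> R) : measurable_fun setT f -> measurable_fun setT g ->
  measurable [set x | f x <= g x].
Proof.
move=> mf mg; have mt : measurable ([set true] : set bool) by [].
have := measurable_fun_ler mf mg measurableT mt.
by rewrite setTI.
Qed.

Lemma mwred p : measurable_fun setT (fun x => w_red col (w x) p).
Proof. exact: msum. Qed.
Lemma mwgreen p : measurable_fun setT (fun x => w_green col (w x) p).
Proof. exact: msum. Qed.

Variable r : R.

Lemma m_lt_gr (a : T -> R) : measurable_fun setT a ->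
  measurable [set x | ((a x)%:E < g_r src tgt col u v e (w x) r)%E].
Proof.
move=> ma.
have -> : [set x | ((a x)%:E < g_r src tgt col u v e (w x) r)%E] =
  \bigcup_(n in [set: nat]) \bigcap_(p in [set: seq E])
    [set x | (is_path src tgt u v p /\ e \notin p) ->
       w_red col (w x) p <= r -> a x + n.+1%:R^-1 <= w_green col (w x) p].
  apply/seteqP; split => x /=.
  - rewrite /g_r => /lt_inf_char [n Hn]; exists n => // p _ [pp ep] pr.
    by apply: Hn.
  - move=> [n _ Hn]; rewrite /g_r; apply/lt_inf_char; exists n => p [pp [ep pr]].
    exact: Hn.
apply: countable_bigcupT_measurable; first exact: countableP.
move=> n; apply: bigcap_count_meas => p.
have [H|H] := pselect (is_path src tgt u v p /\ e \notin p).
- have -> : [set x | (is_path src tgt u v p /\ e \notin p) ->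
       w_red col (w x) p <= r -> a x + n.+1%:R^-1 <= w_green col (w x) p] =
    ~` [set x | w_red col (w x) p <= r] `|`
       [set x | a x + n.+1%:R^-1 <= w_green col (w x) p].
    apply/seteqP; split => x /=.
    + move=> /(_ H) Hx; have [/Hx|] := pselect (w_red col (w x) p <= r).
        by right.
      by left.
    + by case => // Hx _ /Hx.
  apply: measurableU.
    by apply: measurableC; apply: mset_le; [exact: mwred|exact: measurable_cst].
  by apply: mset_le; [exact: measurable_funD|exact: mwgreen].
- have -> : [set x | (is_path src tgt u v p /\ e \notin p) ->
       w_red col (w x) p <= r -> a x + n.+1%:R^-1 <= w_green col (w x) p] = setT.
    by apply/seteqP; split => x //= _ /H.
  exact: measurableT.
Qed.

Definition Dw x := Delta src tgt col u v e (w x) r.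

Lemma mD_lt t : measurable [set x | (Dw x < t%:E)%E].
Proof.
have -> : [set x | (Dw x < t%:E)%E] = \bigcup_(q in [set: seq E])
   ([set x | is_path src tgt u v q /\ e \in q] `&`
    ([set x | ((w_green col (w x) q)%:E < g_r src tgt col u v e (w x) r)%E] `&`
     [set x | w_red col (w x) q < t])).
  apply/seteqP; split => x /=.
  - rewrite /Dw /Delta => /ereal_inf_ltP [_ [q [qp [eq qg]] <-]].
    by rewrite lte_fin => qt; exists q.
  - move=> [q _ [[qp eq] [qg qt]]]; rewrite /Dw /Delta; apply/ereal_inf_ltP.
    by exists (w_red col (w x) q)%:E; [exists q|rewrite lte_fin].
apply: countable_bigcupT_measurable; first exact: countableP.
move=> q; have [H|H] := pselect (is_path src tgt u v q /\ e \in q).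
- have -> : [set x : T | is_path src tgt u v q /\ e \in q] = setT.
    by apply/seteqP; split => x //= _.
  rewrite setTI; apply: measurableI.
    by apply: m_lt_gr; exact: mwgreen.
  by apply: mset_lt; [exact: mwred|exact: measurable_cst].
- have -> : [set x : T | is_path src tgt u v q /\ e \in q] = set0.
    by apply/seteqP; split => x //=.
  by rewrite set0I.
Qed.

Lemma mD_ge t : measurable [set x | (t%:E <= Dw x)%E].
Proof.
have -> : [set x | (t%:E <= Dw x)%E] = ~` [set x | (Dw x < t%:E)%E].
  by apply/seteqP; split => x /=; rewrite leNgt => /negP.
exact/measurableC/mD_lt.
Qed.

Lemma mD_le t : measurable [set x | (Dw x <= t%:E)%E].
Proof.
have -> : [set x | (Dw x <= t%:E)%E] =
  \bigcap_(n in [set: nat]) [set x | (Dw x < (t + n.+1%:R^-1)%:E)%E].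
  apply/seteqP; split => x /=.
  - by move/le_char => H n _; exact: H.
  - by move=> H; apply/le_char => n; exact: H.
by apply: bigcap_count_meas => n; exact: mD_lt.
Qed.

Lemma mD_gt t : measurable [set x | (t%:E < Dw x)%E].
Proof.
have -> : [set x | (t%:E < Dw x)%E] = ~` [set x | (Dw x <= t%:E)%E].
  by apply/seteqP; split => x /=; rewrite ltNge => /negP.
exact/measurableC/mD_le.
Qed.
End Meas.




Section Indep.
Variables (R : realType) (E : finType) (d : measure_display) (Omega : measurableType d)
  (P : probability Omega R) (W : Omega -> E -> R).
Hypothesis W_meas : forall e', measurable_fun setT (fun x => W x e').
Variable e : E.
Hypothesis indep : forall A : E -> set R, (forall e', measurable (A e')) ->
     P [set x | forall e', A e' (W x e')] =
     (P [set x | A e (W x e)] * P [set x | forall e', e' != e -> A e' (W x e')])%E.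

Definition Dset : set (set Omega) :=
  [set B | exists Af : E -> set R, (forall e', measurable (Af e')) /\
           B = [set x | forall e', e' != e -> Af e' (W x e')]].

Lemma mpre e' (A : set R) : measurable A -> measurable [set x | A (W x e')].
Proof. by move=> mA; have := W_meas e' measurableT A mA; rewrite setTI. Qed.

Lemma Dset_meas B : Dset B -> measurable B.
Proof.
move=> [Af [mAf ->]].
have -> : [set x | forall e', e' != e -> Af e' (W x e')] =
   \bigcap_e' [set x | e' != e -> Af e' (W x e')].
  by apply/seteqP; split => x /=; [move=> H e' _; exact: H|move=> H e'; exact: H].
apply: bigcap_count_meas => e' /=; have [Hee|ne] := eqVneq e' e.
  have -> : [set x : Omega | ~~ true -> Af e' (W x e')] = setT.
    by apply/seteqP; split => x.
  exact: measurableT.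
have -> : [set x : Omega | ~~ false -> Af e' (W x e')] = [set x | Af e' (W x e')].
  by apply/seteqP; split => x /=; [move=> H; exact: H|move=> H _].
exact: mpre.
Qed.

Lemma Dset_setI : setI_closed Dset.
Proof.
move=> B1 B2 [A1 [m1 ->]] [A2 [m2 ->]]; exists (fun e' => A1 e' `&` A2 e'); split.
  by move=> e'; apply: measurableI.
apply/seteqP; split => x /=.
  by move=> [H1 H2] e' ne; split; [exact: H1|exact: H2].
by move=> H; split => e' /H [].
Qed.

Lemma fin_P (A : set Omega) : measurable A -> P A \is a fin_num.
Proof. by move=> mA; apply: fin_num_measure. Qed.

Variables (A : set R) (mA : measurable A).
Let Aev := [set x | A (W x e)].
Let mAev : measurable Aev. Proof. exact: (mpre e A mA). Qed.

Definition Hsys := [set B | measurable B /\ P (Aev `&` B) = (P Aev * P B)%E].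

Lemma Dset_H : Dset `<=` Hsys.
Proof.
move=> B DB; split; first exact: Dset_meas.
move: DB => [Af [mAf ->]].
pose Af' := fun e' => if e' == e then A else Af e'.
have mAf' : forall e', measurable (Af' e').
  by move=> e'; rewrite /Af'; case: eqP.
have := indep Af' mAf'.
have -> : [set x | forall e', Af' e' (W x e')] =
   Aev `&` [set x | forall e', e' != e -> Af e' (W x e')].
  apply/seteqP; split => x /=.
  - move=> H; split; first by have := H e; rewrite /Af' eqxx.
    by move=> e' ne; have := H e'; rewrite /Af' (negPf ne).
  - move=> [He H] e'; rewrite /Af'; case: eqP => [->//|/eqP ne]; exact: H.
rewrite /Af' eqxx => ->; congr (_ * P _)%E.
apply/seteqP; split => x /= H e' ne; have := H e' ne; by rewrite (negPf ne).
Qed.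

Lemma H_dynkin : dynkin Hsys.
Proof.
split.
- split; first exact: measurableT.
  have P1 : P [set: Omega] = 1%E by exact: probability_setT.
  by rewrite setIT P1 mule1.
- move=> B [mB HB]; split; first exact: measurableC.
  rewrite -setDE measureD //; last by rewrite ltey_eq fin_P.
  have -> : P (~` B) = (1 - P B)%E.
    rewrite -setTD measureD //; last by rewrite ltey_eq fin_P.
    by rewrite setTI; congr (_ - _)%E; exact: probability_setT.
  transitivity (P Aev - P Aev * P B)%E; first by congr (_ - _)%E; exact: HB.
  rewrite -(fineK (fin_P _ mAev)) -(fineK (fin_P _ mB)) -!EFinM -!EFinB.
  by congr EFin; ring.
- move=> F tF HF; have mF : forall n, measurable (F n) by move=> n; case: (HF n).
  split; first exact: bigcupT_measurable.
  rewrite setI_bigcupr measure_semi_bigcup //; first last.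
  + by apply: bigcupT_measurable => n; apply: measurableI.
  + exact: trivIset_setIl.
  + by move=> n; apply: measurableI.
  rewrite measure_semi_bigcup //; last exact: bigcupT_measurable.
  transitivity (\sum_(0 <= i <oo) ((fine (P Aev))%:E * P (F i)))%E.
    by apply: eq_eseriesr => n _; rewrite fineK ?fin_P //; case: (HF n).
  by rewrite nneseriesZl ?fineK ?fin_P // => n _.
Qed.

Lemma indep_ext B : <<s Dset >> B -> measurable B /\ P (Aev `&` B) = (P Aev * P B)%E.
Proof.
move=> sB; apply: (lambda_system_subset Dset_setI _ Dset_H _ sB).
  exact/dynkin_lambda_system/H_dynkin.
by [].
Qed.
End Indep.


Lemma cell (R : realType) (δ y : R) (N : nat) : 0 < δ -> 0 <= y -> y < N%:R * δ ->
  exists2 k : nat, (k < N)%N & (k%:R * δ <= y) && (y < k.+1%:R * δ).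
Proof.
move=> hd hy; elim: N => [|N IH].
  by rewrite mul0r => /(le_lt_trans hy); rewrite ltxx.
move=> hN; have [yN|yN] := ltP y (N%:R * δ).
  by have [k kN Hk] := IH yN; exists k => //; exact: ltnW.
by exists N => //; rewrite yN hN.
Qed.

Lemma density_bound (R : realType) d (Omega : measurableType d) (P : probability Omega R)
  (X : Omega -> R) (f : R -> R) (phi : R) (phi_pos : 0 < phi)
  (f_meas : measurable_fun (`]0, +oo[ : set R) f)
  (f_bound : forall y, 0 < y -> 0 <= f y <= phi)
  (f_density : forall A : set R, measurable A ->
     P [set x | A (X x)] =
     (\int[lebesgue_measure]_(y in A `&` `](0%R:R), +oo[%classic) (f y)%:E)%E)
  (a b : R) : a <= b ->
  (P [set x | [set` `]a, b]] (X x)] <= (phi * (b - a))%:E)%E.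
Proof.
move=> ab; rewrite f_density; last exact: measurable_itv.
set D := _ `&` _.
have mD : measurable D by apply: measurableI; exact: measurable_itv.
have Dpos : forall y, D y -> 0 < y.
  by move=> y [_]; rewrite /= in_itv /= andbT.
apply: (@le_trans _ _ (\int[lebesgue_measure]_(y in D) (cst phi%:E) y)%E).
  apply: ge0_le_integral => //.
  - by move=> y /Dpos /f_bound /andP[]; rewrite lee_fin.
  - apply/measurable_EFinP; apply: measurable_funS f_meas => //.
    by move=> y /Dpos; rewrite /= in_itv /= andbT.
  - by move=> y /Dpos /f_bound /andP[_]; rewrite lee_fin.
rewrite integral_cst // EFinM; apply: lee_wpmul2l; first by rewrite lee_fin ltW.
apply: (@le_trans _ _ (lebesgue_measure [set` `]a, b]])).
  by apply: le_measure; rewrite ?inE //; apply: subIsetl.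
rewrite (lebesgue_measure_itv `]a, b]) /=; case: ifPn => [_|]; first by rewrite -EFinB.
by rewrite lee_fin subr_ge0.
Qed.

Theorem lemma4 (R : realType) (V E : finType) (src tgt : E -> V)
  (col : E -> colour) (u v : V)
  (green_path : exists p, is_path src tgt u v p /\ all (fun x => is_green (col x)) p)
  (d : measure_display) (Omega : measurableType d) (P : probability Omega R)
  (W : Omega -> E -> R)
  (W_meas : forall e', measurable_fun setT (fun x => W x e'))
  (W_pos : forall x e', 0 < W x e')
  (e : E) (e_red : col e = Red)
  (f : R -> R) (phi : R) (phi_pos : 0 < phi)
  (f_meas : measurable_fun (`]0, +oo[ : set R) f)
  (f_bound : forall y, 0 < y -> 0 <= f y <= phi)
  (f_density : forall A : set R, measurable A ->
     P [set x | A (W x e)] =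
     (\int[lebesgue_measure]_(y in A `&` `](0%R:R), +oo[%classic) (f y)%:E)%E)
  (indep : forall A : E -> set R, (forall e', measurable (A e')) ->
     P [set x | forall e', A e' (W x e')] =
     (P [set x | A e (W x e)] * P [set x | forall e', e' != e -> A e' (W x e')])%E)
  (r eps : R) (r_ge0 : 0 <= r) (eps_ge0 : 0 <= eps) :
  (P [set x | (r%:E < Delta src tgt col u v e (W x) r)%E /\
              (Delta src tgt col u v e (W x) r <= (r + eps)%:E)%E]
   <= (phi * eps)%:E)%E.
Proof.
pose W0 := fun (x : Omega) => w0 R E e (W x).
pose c := fun x => Delta src tgt col u v e (W0 x) r.
have Dspl : forall x, Delta src tgt col u v e (W x) r = ((W x e)%:E + c x)%E.
  by move=> x; apply: Delta_split.
have c_ge0 : forall x, (0 <= c x)%E.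
  move=> x; apply/ereal_infP => _ [q _ <-]; rewrite lee_fin /w_red.
  apply: sumr_ge0 => i _; rewrite /W0 /w0; case: eqP => // _; exact: ltW.
pose Dst := Dset R E d Omega W e.
pose Om' := g_sigma_algebraType Dst.
have W0m : forall e', measurable_fun (setT : set Om') (fun x : Om' => W0 x e').
  move=> e'; rewrite /W0 /w0; case: eqP => [_|/eqP ne].
    exact: measurable_cst.
  move=> _ Y mY; rewrite setTI.
  apply: (@sub_sigma_algebra _ setT Dst).
  exists (fun e'' => if e'' == e' then Y else setT); split.
    by move=> e''; case: eqP.
  apply/seteqP; split => x /=.
  - by move=> H e'' _; case: eqP => [->|] //.
  - by move=> /(_ e' ne); rewrite eqxx.
set S := [set x | _ /\ _].
have mS : measurable S.
  exact: (measurableI _ _ (mD_gt R V E src tgt col u v e d Omega W W_meas r r)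
                          (mD_le R V E src tgt col u v e d Omega W W_meas r (r + eps))).
apply/lee_addgt0Pr => dl hdl.
pose δ := dl / phi.
have hδ : 0 < δ by apply: divr_gt0.
suff H : (P S <= (phi * (eps + δ))%:E)%E.
  apply: (le_trans H); rewrite -EFinD lee_fin /δ.
  by rewrite mulrDr [phi * (dl / phi)]mulrC divfK ?gt_eqF.
have [N HN] : exists N : nat, r + eps < N%:R * δ.
  exists (Num.bound ((r + eps) / δ)); rewrite -ltr_pdivrMr //.
  by apply: archi_boundP; apply: divr_ge0; [lra|exact: ltW].
pose A k := [set` `](r - k.+1%:R * δ), (r + eps - k%:R * δ)]].
pose Aev k := [set x : Omega | A k (W x e)].
pose B k := [set x : Omega | ((k%:R * δ)%:E <= c x)%E /\ (c x < (k.+1%:R * δ)%:E)%E].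
pose F k := Aev k `&` B k.
have sB : forall k, <<s Dst >> (B k).
  move=> k.
  exact: (measurableI _ _ (mD_ge R V E src tgt col u v e _ Om' W0 W0m r (k%:R * δ))
                          (mD_lt R V E src tgt col u v e _ Om' W0 W0m r (k.+1%:R * δ))).
have IK : forall k, measurable (B k) /\ P (Aev k `&` B k) = (P (Aev k) * P (B k))%E.
  move=> k; exact: (indep_ext R E d Omega P W W_meas e indep (A k) (measurable_itv _) (B k) (sB k)).
have mB : forall k, measurable (B k) by move=> k; case: (IK k).
have mAev : forall k, measurable (Aev k).
  by move=> k; exact: (mpre R E d Omega W W_meas e (A k) (measurable_itv _)).
have mF : forall k, measurable (F k) by move=> k; apply: measurableI.
have tB : trivIset setT B.
  move=> i j _ _ [x [[i1 i2] [j1 j2]]].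
  wlog ij : i j i1 i2 j1 j2 / (i <= j)%N.
    move=> Hw; case: (leqP i j) => [h|/ltnW h]; first exact: Hw.
    by symmetry; exact: Hw.
  apply/eqP; rewrite eqn_leq ij /= leqNgt; apply/negP => ilt.
  have h : ((i.+1%:R * δ)%:E <= (j%:R * δ)%:E)%E by rewrite lee_fin ler_pM2r // ler_nat.
  by have := le_lt_trans (le_trans h j1) i2; rewrite ltxx.
have tF : trivIset setT F by exact: (trivIset_setIl tB).
have sub : S `<=` \big[setU/set0]_(k < N) F k.
  rewrite -bigcup_mkord => x [h1 h2]; rewrite Dspl in h1 h2.
  have Wp := W_pos x e.
  move: h1 h2 (c_ge0 x); case Ec: (c x) => [y| |] h1 h2 hc.
  - rewrite lte_fin in h1; rewrite lee_fin in h2; rewrite lee_fin in hc.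
    have yN : y < N%:R * δ by lra.
    have [k kN /andP[k1 k2]] := cell _ _ _ _ hδ hc yN.
    exists k => //=; split.
    + by rewrite /Aev /A /= in_itv /=; apply/andP; split; lra.
    + by rewrite /B /= Ec lee_fin lte_fin.
  - by move: h2; rewrite addey // leye_eq.
  - by move: hc; rewrite leeNy_eq.
have mU : measurable (\big[setU/set0]_(k < N) F k).
  by apply: bigsetU_measurable => k _; exact: mF.
apply: (le_trans (le_measure P (mem_set mS) (mem_set mU) sub)).
rewrite (measure_bigsetU P mF tF N).
apply: (@le_trans _ _ (\sum_(k < N) ((phi * (eps + δ))%:E * P (B k)))%E).
  apply: lee_sum => k _.
  have E1 : P (F k) = (P (Aev k) * P (B k))%E := (IK k).2.
  apply: (@le_trans _ _ (P (Aev k) * P (B k))%E).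
    exact: (eq_ind _ (fun z => (P (F k) <= z)%E) (lexx _) _ E1).
  apply: lee_wpmul2r; first exact: measure_ge0.
  have hab : r - k.+1%:R * δ <= r + eps - k%:R * δ.
    by rewrite -natr1; nra.
  apply: (le_trans (density_bound R d Omega P (fun x => W x e) f phi phi_pos
            f_meas f_bound f_density _ _ hab)).
  by rewrite -natr1 lee_fin le_eqVlt; apply/orP; left; apply/eqP; ring.
rewrite -ge0_sume_distrr; last by move=> k _; exact: measure_ge0.
rewrite -(measure_bigsetU P mB tB N).
apply: (@le_trans _ _ ((phi * (eps + δ))%:E * 1)%E); last by rewrite mule1.
apply: lee_wpmul2l; first by rewrite lee_fin; apply: mulr_ge0; lra.
apply: probability_le1; apply: bigsetU_measurable => k _; exact: mB.
Qed.
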